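(* Let $\widehat{A}=A+\epsilon B$ and $\widehat{C}=C+\epsilon D$ with $A,B,C,D\in\mathbb{R}^{n\times n}$ be such that the dual group generalized inverses of $\widehat{A}$, $\widehat{C}$ and $\widehat{A}\widehat{C}$ exist and have the particular form $\widehat{A}^{\#}=A^{\#}-\epsilon A^{\#}BA^{\#}$, $\widehat{C}^{\#}=C^{\#}-\epsilon C^{\#}DC^{\#}$, $(\widehat{A}\widehat{C})^{\#}=(AC)^{\#}-\epsilon (AC)^{\#}(AD+BC)(AC)^{\#}$. If $AC=CA$, $C^{\#}B=BC^{\#}$ and $A^{\#}D=DA^{\#}$, then $(\widehat{A}\widehat{C})^{\#}=\widehat{A}^{\#}\widehat{C}^{\#}=\widehat{C}^{\#}\widehat{A}^{\#}$.
   Context: A dual number is $a+\epsilon b$ with $a,b\in\mathbb{R}$, where $\epsilon\neq 0$, $\epsilon^2=0$ and $\epsilon$ commutes with reals. A dual matrix is $A+\epsilon B$ with $A,B$ real; sums and products are computed formally using $\epsilon^2=0$ (so $(A+\epsilon B)(C+\epsilon D)=AC+\epsilon(AD+BC)$), and equality means equality of real and dual parts. For a real square matrix $A$, $A^{\#}$ denotes its group inverse. For a square dual matrix $\widehat{A}$ of dual index $1$ (i.e., $R(\widehat{A})=R(\widehat{A}^2)$ over dual vectors), its dual group generalized inverse (DGGI) $\widehat{A}^{\#}$ is the unique dual matrix $\widehat{X}$ (if it exists) with $\widehat{A}\widehat{X}\widehat{A}=\widehat{A}$, $\widehat{X}\widehat{A}\widehat{X}=\widehat{X}$, $\widehat{A}\widehat{X}=\widehat{X}\widehat{A}$.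 *)

(* Defs.v *)
From HB Require Import structures.
From mathcomp Require Import all_boot all_order all_algebra.
Set Implicit Arguments. Unset Strict Implicit. Unset Printing Implicit Defensive.
Import Order.TTheory GRing.Theory Num.Theory.
Local Open Scope ring_scope.

(* A dual matrix A + eps B is represented by the pair (A, B) of real matrices. *)
Definition dualmx (R : realFieldType) (n : nat) : Type := ('M[R]_n * 'M[R]_n)%type.

Definition dmk (R : realFieldType) (n : nat) (A B : 'M[R]_n) : dualmx R n := (A, B).

(* (A + eps B)(C + eps D) = AC + eps (AD + BC) *)
Definition dmul (R : realFieldType) (n : nat) (P Q : dualmx R n) : dualmx R n :=
  (P.1 *m Q.1, P.1 *m Q.2 + P.2 *m Q.1).

Definition is_group_inverse (R : realFieldType) (n : nat) (A X : 'M[R]_n) : Prop :=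
  [/\ A *m X *m A = A, X *m A *m X = X & A *m X = X *m A].

Definition is_DGGI (R : realFieldType) (n : nat) (A X : dualmx R n) : Prop :=
  [/\ dmul (dmul A X) A = A, dmul (dmul X A) X = X & dmul A X = dmul X A].

(* Main.v *)
Require Import Defs.
From mathcomp Require Import all_boot all_order all_algebra.
Local Open Scope ring_scope.
Import GRing.Theory.

Ltac stp r := first [ by rewrite [in LHS]r | by rewrite [in RHS]r ].
Section S.
Variables (R : realFieldType) (n : nat).
Implicit Types P Q S T U V X Y M : 'M[R]_n.

Lemma rA2 {P Q S T} : P *m Q = S *m T -> forall M, P *m (Q *m M) = S *m (T *m M).
Proof. by move=> h M; rewrite !mulmxA h. Qed.
Lemma rA3 {P Q S T} : P *m Q *m S = T -> forall M, P *m (Q *m (S *m M)) = T *m M.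
Proof. by move=> h M; rewrite !mulmxA h. Qed.

Lemma gi_rules {A Ag} : is_group_inverse A Ag ->
  [/\ forall M, A *m (Ag *m M) = Ag *m (A *m M),
      forall M, Ag *m (A *m (A *m M)) = A *m M,
      forall M, Ag *m (Ag *m (A *m M)) = Ag *m M,
      forall M, A *m (A *m (Ag *m M)) = A *m M &
      forall M, A *m (Ag *m (Ag *m M)) = Ag *m M].
Proof.
case=> h1 h2 h3; have r := rA2 h3.
have r2 M : Ag *m (A *m (A *m M)) = A *m M by rewrite -r (rA3 h1).
have r3 M : Ag *m (Ag *m (A *m M)) = Ag *m M by rewrite -r (rA3 h2).
by split => // M; rewrite !r ?r2 ?r3.
Qed.


Lemma comm_ginv A Ag X :
  is_group_inverse A Ag -> A *m X = X *m A -> Ag *m X = X *m Ag.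
Proof.
move=> hg hx; have [r1 r2 r3 r4 r5] := gi_rules hg; have x1 := rA2 hx.
rewrite -[LHS]mulmx1 -[RHS]mulmx1 -!mulmxA.
set M := 1%:M.
transitivity (Ag *m (Ag *m (A *m (X *m M)))); first stp r3.
transitivity (Ag *m (Ag *m (X *m (A *m M)))); first stp x1.
transitivity (Ag *m (Ag *m (X *m (A *m (A *m (Ag *m M)))))); first stp r4.
transitivity (Ag *m (Ag *m (A *m (X *m (A *m (Ag *m M)))))); first stp x1.
transitivity (Ag *m (X *m (A *m (Ag *m M)))); first stp r3.
transitivity (Ag *m (A *m (X *m (Ag *m M)))); first stp x1.
symmetry.
transitivity (X *m (A *m (Ag *m (Ag *m M)))); first stp r5.
transitivity (A *m (X *m (Ag *m (Ag *m M)))); first stp x1.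
transitivity (Ag *m (A *m (A *m (X *m (Ag *m (Ag *m M)))))); first stp r2.
transitivity (Ag *m (A *m (X *m (A *m (Ag *m (Ag *m M)))))); first stp x1.
stp r5.
Qed.

Lemma gi_uniq P X Y : is_group_inverse P X -> is_group_inverse P Y -> X = Y.
Proof.
move=> hx hy; have [rx1 _ rx3 _ _] := gi_rules hx; have [ry1 _ ry3 _ _] := gi_rules hy.
case: hx => px1 _ _; case: hy => py1 py2 py3.
have pp := rA3 px1; have qq := rA3 py1.
have gy : P *m Y *m Y = Y by rewrite py3.
have gy' := rA3 gy.
rewrite -[LHS]mulmx1 -[RHS]mulmx1; set E := 1%:M.
transitivity (X *m (P *m (Y *m E))).
  transitivity (X *m (X *m (P *m E))); first stp rx3.
  transitivity (X *m (X *m (P *m (Y *m (P *m E))))); first stp qq.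
  transitivity (X *m (Y *m (P *m E))); first stp rx3.
  stp ry1.
symmetry.
transitivity (P *m (Y *m (Y *m E))); first stp gy'.
transitivity (P *m (X *m (P *m (Y *m (Y *m E))))); first stp pp.
transitivity (X *m (P *m (P *m (Y *m (Y *m E))))); first stp rx1.
stp gy'.
Qed.
End S.
Arguments rA2 {R n P Q S T}.
Arguments rA3 {R n P Q S T}.
Arguments gi_rules {R n A Ag}.
Arguments comm_ginv {R n A Ag X}.
Arguments gi_uniq {R n P X Y}.

Ltac nrm := rewrite -[LHS]mulmx1 -[RHS]mulmx1 ?(mulmxDl, mulmxDr, mulNmx, mulmxN, opprK, opprD) -?mulmxA.

Theorem mainTheorem6 (R : realFieldType) (n : nat) (A B C D : 'M[R]_n)
    (Ag Cg ACg : 'M[R]_n) :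
  is_group_inverse A Ag ->
  is_group_inverse C Cg ->
  is_group_inverse (A *m C) ACg ->
  is_DGGI (dmk A B) (dmk Ag (- (Ag *m B *m Ag))) ->
  is_DGGI (dmk C D) (dmk Cg (- (Cg *m D *m Cg))) ->
  is_DGGI (dmul (dmk A B) (dmk C D))
          (dmk ACg (- (ACg *m (A *m D + B *m C) *m ACg))) ->
  A *m C = C *m A ->
  Cg *m B = B *m Cg ->
  Ag *m D = D *m Ag ->
  dmk ACg (- (ACg *m (A *m D + B *m C) *m ACg))
    = dmul (dmk Ag (- (Ag *m B *m Ag))) (dmk Cg (- (Cg *m D *m Cg)))
  /\ dmul (dmk Ag (- (Ag *m B *m Ag))) (dmk Cg (- (Cg *m D *m Cg)))
    = dmul (dmk Cg (- (Cg *m D *m Cg))) (dmk Ag (- (Ag *m B *m Ag))).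
Proof.
move=> hA hC hAC _ _ _ eAC eB eD.
have c1 : Ag *m C = C *m Ag := comm_ginv hA eAC.
have c2 : Cg *m A = A *m Cg := comm_ginv hC (esym eAC).
have c3 : Ag *m Cg = Cg *m Ag := comm_ginv hA (esym c2).
have [a1 a2 a3 _ _] := gi_rules hA.
have [k1 k2 k3 _ _] := gi_rules hC.
have s1 := rA2 (esym eAC); have s2 := rA2 (esym c1); have s3 := rA2 c2;
have s4 := rA2 (esym c3); have s5 := rA2 eB; have s6 := rA2 (esym eD).
have hg : is_group_inverse (A *m C) (Ag *m Cg).
  split; nrm; by rewrite !(s1, s2, s3, s4, s5, s6, a1, a2, a3, k1, k2, k3).
have e := gi_uniq hAC hg; subst ACg.
rewrite /dmk /dmul /=; split; congr pair; nrm;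
  rewrite !(s1, s2, s3, s4, s5, s6, a1, a2, a3, k1, k2, k3) //.
by rewrite addrC.
Qed.
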